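(* Let $n=\prod_{i=1}^{k}p_i^{t_i}$, where $p_1,\dots,p_k$ are distinct odd primes and $t_1,\dots,t_k\ge 0$ are integers. Then the lattice $\widetilde\Pi(D_n)$ is isomorphic to the direct product lattice $T(n)\times C_2$.
   Context: For a positive integer $n$, $D_n=\langle r,s\mid r^n=e,\ s^2=e,\ srs^{-1}=r^{-1}\rangle$ is the dihedral group of order $2n$. For a finite group $G$ and a subgroup $H\le G$, let $\pi_e(H)=\{o(x)\mid x\in H\}$. Let $\mathcal{L}(G)$ be the set of subgroups of $G$; define $H_1\equiv H_2$ iff $\pi_e(H_1)=\pi_e(H_2)$, with class $[H]$. The poset $\widetilde\Pi(G)$ is $\mathcal{L}(G)/\!\equiv$ ordered by $[H_1]\lesssim[H_2]$ iff $\pi_e(H_1)\subseteq\pi_e(H_2)$ (for $G=D_n$ this poset is a lattice). $T(n)$ denotes the lattice of positive divisors of $n$ ordered by divisibility, $C_2$ the two-element chain, and $T(n)\times C_2$ carries the componentwise order. *)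

(* Defs.v *)
From mathcomp Require Import all_boot all_fingroup.
Set Implicit Arguments. Unset Strict Implicit. Unset Printing Implicit Defensive.
Local Open Scope group_scope.

Definition pi_e (gT : finGroupType) (H : {set gT}) : seq nat :=
  [seq #[x] | x <- enum H].

Definition pi_le (gT : finGroupType) (H1 H2 : {set gT}) : Prop :=
  {subset pi_e H1 <= pi_e H2}.

Definition TC2_le (a b : nat * bool) : bool := (a.1 %| b.1) && (a.2 ==> b.2).

(* Pi~(G) is order-isomorphic to T(n) x C_2: there is a map f from subgroups
   of G to pairs (d, b) with d | n, which is surjective onto divisors x bool
   and reflects/preserves the order:  pi_e(H) <= pi_e(K) <-> f H <= f K.
   Such an f is constant on the classes [H] and induces an order isomorphism
   (hence lattice isomorphism) from Pi~(G) onto T(n) x C_2. *)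
Definition Pi_tilde_iso_TC2 (gT : finGroupType) (G : {group gT}) (n : nat) : Prop :=
  exists f : {group gT} -> nat * bool,
    [/\ forall H : {group gT}, H \subset G -> (f H).1 %| n,
        forall d b, d %| n -> exists2 H : {group gT}, H \subset G & f H = (d, b)
      & forall H K : {group gT}, H \subset G -> K \subset G ->
          (pi_le H K <-> TC2_le (f H) (f K))].

(* Main.v *)
Require Import Defs.
From mathcomp Require Import all_boot all_fingroup all_solvable zmodp zify.
Local Open Scope group_scope.
Lemma model1 : [set: 'Z_2] \homg Grp (r : s : r ^+ 1, s ^+ 2, s * r * s^-1 = r^-1).
Proof.
apply/existsP; exists (1, Zp1) => /=. rewrite !xpair_eqE /=.
rewrite cycle1 joing1G eqEcard subsetT cardsT card_ord -orderE order_Zp1 leqnn /=.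
by rewrite mulg1 mulgV invg1.
Qed.
Lemma modelD q : 1 < q ->
  [set: 'D_q.*2] \homg Grp (r : s : r ^+ q, s ^+ 2, s * r * s^-1 = r^-1).
Proof.
move=> q1.
have := isoGrp_hom (Grp_dihedral q1).
case/existsP=> -[x y] /= /eqP[defG xq y2 xy].
apply/existsP; exists (x, y) => /=; rewrite !xpair_eqE /= defG xq y2 !eqxx /=.
have yV : y^-1 = y by apply/eqP; rewrite eq_invg_mul -[y * y]/(y ^+ 2) y2.
by rewrite -xy /conjg yV mulgA.
Qed.
Lemma cyclic_elt_order gT (D : {group gT}) m :
  cyclic D -> m %| #|D| -> exists2 x, x \in D & #[x] = m.
Proof.
case/cyclicP=> y -> dm; rewrite -orderE in dm.
have y0 := order_gt0 y.
have k_dvd : #[y] %/ m %| #[y] by apply: dvdn_div.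
exists (y ^+ (#[y] %/ m)); first by rewrite mem_cycle.
rewrite orderXdiv // divnA // mulKn //.
Qed.

Lemma main_part gT (G : {group gT}) n (r s : gT) : odd n ->
  G :=: <[r]> <*> <[s]> -> #[r] = n -> s \notin <[r]> -> s ^+ 2 = 1 ->
  r ^ s = r^-1 -> Pi_tilde_iso_TC2 G n.
Proof.
move=> oddn defG ordr sC s2 rs.
set C := <[r]>.
have sV : s^-1 = s by apply/eqP; rewrite eq_invg_mul -[s * s]/(s ^+ 2) s2.
have CG : C \subset G by rewrite defG joing_subl.
have sG : s \in G by rewrite defG mem_gen // inE cycle_id orbT.
have cs : forall c, c \in C -> c ^ s = c^-1.
  by move=> c /cycleP[i ->]; rewrite conjXg rs expgVn.
have nCs : <[s]> \subset 'N(C) by rewrite norms_cycle rs groupV cycle_id.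
have defG' : G :=: C * <[s]> by rewrite defG norm_joinEr.
have s1 : s != 1 by apply: contra sC => /eqP ->; rewrite group1.
have os : #[s] = 2.
  have : #[s] %| 2 by rewrite order_dvdn s2.
  have : #[s] != 1%N by rewrite order_eq1.
  by rewrite dvdn_divisors // !inE => /negPf -> /= /eqP.
have inv2 : forall x, x \in G -> x \notin C -> #[x] = 2.
  move=> x; rewrite defG' => /imset2P[c t cC]; rewrite (cycle2g os) !inE.
  case/pred2P=> -> -> {t}; first by rewrite mulg1 cC.
  move=> cs_notC.
  have x1 : c * s != 1 by apply: contra cs_notC => /eqP ->; rewrite group1.
  have e2 : (c * s) ^+ 2 = 1.
    rewrite expgS expg1 -mulgA [s * (c * s)]mulgA -{1}sV.
    by rewrite -!mulgA -[s^-1 * (c * s)]/(c ^ s) cs // mulgV.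

  have : #[c * s] %| 2 by rewrite order_dvdn e2.
  have : #[c * s] != 1%N by rewrite order_eq1.
  by rewrite dvdn_divisors // !inE => /negPf -> /= /eqP.
have memPi : forall H : {group gT}, H \subset G -> forall m,
    (m \in pi_e H) = (m %| #|H :&: C|) || ((m == 2) && ~~ (H \subset C)).
  move=> H HG m; apply/idP/idP.
    case/mapP=> x; rewrite mem_enum => xH ->.
    case xC : (x \in C).
      by rewrite order_dvdG // inE xH xC.
    rewrite inv2 ?(subsetP HG) ?xC // eqxx /=; apply/orP; right.
    by apply/subsetPn; exists x => //; rewrite xC.
  case/orP.
    move=> md; have cycD : cyclic (H :&: C) by rewrite (cyclicS (subsetIr _ _)) ?cycle_cyclic.
    have [x xD <-] := @cyclic_elt_order _ (H :&: C)%G m cycD md.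
    by apply/mapP; exists x; rewrite // mem_enum; case/setIP: xD.
  case/andP=> /eqP -> /subsetPn[x xH xC].
  by apply/mapP; exists x; rewrite ?mem_enum // inv2 // (subsetP HG).
have oddD : forall H : {group gT}, odd #|H :&: C|.
  move=> H; apply: (dvdn_odd _ oddn); rewrite -ordr orderE.
  by apply: cardSg; apply: subsetIr.
exists (fun H : {group gT} => (#|H :&: C|, ~~ (H \subset C))); split.
- move=> H _ /=; rewrite -ordr orderE; exact: cardSg (subsetIr _ _).
- move=> d b dn.
  have n0 : 0 < n by case: n oddn {ordr dn}.
  have kn : n %/ d %| #[r] by rewrite ordr dvdn_div.
  set y := r ^+ (n %/ d).
  have oy : #[y] = d by rewrite /y orderXdiv // ordr divnA // mulKn.
  have yC : <[y]> \subset C by rewrite cycle_subG mem_cycle.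
  case: b.
    have nys : <[s]> \subset 'N(<[y]>).
      by rewrite norms_cycle /y conjXg rs expgVn groupV cycle_id.
    exists (<[y]> <*> <[s]>)%G.
      by rewrite join_subG (subset_trans yC CG) cycle_subG sG.
    have TI : <[s]> :&: C = 1.
      by apply: coprime_TIg; rewrite -!orderE os ordr coprime2n.
    rewrite /= norm_joinEr // -group_modl // TI mulg1 -orderE oy; congr (_, _).
    apply/subsetPn; exists s => //.
    by rewrite (subsetP (mulG_subr _ _)) // cycle_id.
  exists <[y]>%G; first exact: subset_trans yC CG.
  by rewrite /= (setIidPl yC) -orderE oy yC.
move=> H K HG KG; rewrite /pi_le /TC2_le /=; split.
  move=> sub; apply/andP; split.
    have hd : #|H :&: C| \in pi_e H by rewrite memPi // dvdnn.
    move: (sub _ hd); rewrite memPi // => /orP[//|/andP[/eqP e _]].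
    by move: (oddD H); rewrite e.
  apply/implyP => nHC.
  have h2 : 2 \in pi_e H by rewrite memPi // eqxx nHC orbT.
  move: (sub _ h2); rewrite memPi // => /orP[|/andP[_ //]].
  by move=> d2; move: (dvdn_odd d2 (oddD K)).
case/andP=> dHK bHK m; rewrite !memPi // => /orP[md|/andP[m2 nH]].
  by rewrite (dvdn_trans md dHK).
by rewrite m2 (implyP bHK nH) orbT.
Qed.

Theorem theorem2p6 (n : nat) (gT : finGroupType) (G : {group gT}) :
  0 < n -> odd n ->
  G \isog Grp (r : s : r ^+ n, s ^+ 2, s * r * s^-1 = r^-1) ->
  Pi_tilde_iso_TC2 G n.
Proof.
move=> n0 oddn isoG.
have hM : n.*2 %| #|G|.
  have [n1 | n1] := leqP n 1.
    have e1 : n = 1%N by apply/eqP; rewrite eqn_leq n1 n0.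
    have hom : [set: 'Z_2] \homg G by rewrite isoG e1; exact: model1.
    by have := card_homg hom; rewrite cardsT card_ord e1.
  have hom : [set: 'D_n.*2] \homg G by rewrite isoG; exact: modelD.
  by have := card_homg hom; rewrite card_dihedral.
have := isoGrp_hom isoG.
case/existsP=> -[r s] /= /eqP[defG rn s2 rel].
have sV : s^-1 = s by apply/eqP; rewrite eq_invg_mul -[s * s]/(s ^+ 2) s2.
have rs : r ^ s = r^-1 by rewrite -rel /conjg sV mulgA.
have nrs : <[s]> \subset 'N(<[r]>) by rewrite norms_cycle rs groupV cycle_id.
have defG' : G :=: <[r]> * <[s]> by rewrite -defG norm_joinEr.
have cardE := mul_cardG <[r]> <[s]>.
rewrite -defG' -!orderE in cardE.
have ar : #[r] <= n by apply: dvdn_leq => //; rewrite order_dvdn rn.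
have bs : #[s] <= 2 by apply: dvdn_leq => //; rewrite order_dvdn s2.
have gG : n.*2 <= #|G| by apply: dvdn_leq.
have i0 : 0 < #|<[r]> :&: <[s]>| by rewrite cardG_gt0.
rewrite -mul2n in gG.
have [ordr [i1 os]] : #[r] = n /\ #|<[r]> :&: <[s]>| = 1%N /\ #[s] = 2.
  have cE : (#[r] * #[s] = #|G| * #|<[r]> :&: <[s]>|)%N by exact: cardE.
  move: cE gG ar bs i0 n0; clear; move=> *; nia.
apply: (@main_part gT G n r s oddn (esym defG) ordr _ s2 rs).
apply/negP => sr.
have e : <[r]> :&: <[s]> = <[s]> by apply/setIidPr; rewrite cycle_subG.
by move: i1; rewrite e -orderE os.
Qed.
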